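(* Suppose $s_0,s_1,s_2,s_3\in\sum\mathbb{R}(x,y)^2$ satisfy $s_0\,xy=s_1+s_2\,x+s_3\,y$. Then $s_0=s_1=s_2=s_3=0$.
   Context: $\mathbb{R}(x,y)$ is the field of rational functions in two real variables and $\sum\mathbb{R}(x,y)^2$ is the set of finite sums of squares of its elements. *)

(* Defs.v *)
From HB Require Import structures.
From mathcomp Require Import all_boot all_order all_algebra.
Set Implicit Arguments. Unset Strict Implicit. Unset Printing Implicit Defensive.
Import Order.TTheory GRing.Theory Num.Theory.
Local Open Scope ring_scope.

(* R(x,y) := field of fractions of R[y][x] = R[x,y]. *)
Definition ratfun2 (R : rcfType) := {fraction {poly {poly R}}}.

(* the variable x : outer polynomial variable; y : inner variable *)
Definition varX (R : rcfType) : ratfun2 R := FracField.tofrac ('X : {poly {poly R}}).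
Definition varY (R : rcfType) : ratfun2 R := FracField.tofrac (('X : {poly R})%:P : {poly {poly R}}).

Definition is_sos (K : comNzRingType) (f : K) : Prop :=
  exists s : seq K, f = \sum_(g <- s) g ^+ 2.

(* Main.v *)
Require Import Defs.
From HB Require Import structures.
From mathcomp Require Import all_boot all_order all_algebra.
Import Order.TTheory GRing.Theory Num.Theory.
Local Open Scope ring_scope.
Local Open Scope quotient_scope.

Section Helpers.
Set Implicit Arguments. Unset Strict Implicit.

Lemma frac_repr (T : idomainType) (x : {fraction T}) :
  exists a b, b != 0 /\ x = (FracField.tofrac a) / (FracField.tofrac b).
Proof.
elim/quotW: x => r.
exists r.1, r.2; split; first exact: denom_ratioP.
rewrite /GRing.inv /= /GRing.mul /=.
unlock FracField.tofrac.
rewrite -FracField.pi_inv -FracField.pi_mul.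
apply/eqmodP; rewrite /= FracField.equivfE /=.
rewrite /FracField.invf /FracField.mulf.
rewrite !numden_Ratio ?oner_neq0 ?denom_ratioP ?mulf_neq0 ?oner_neq0 ?denom_ratioP //.
by rewrite mul1r mulr1 mulrC.
Qed.

Definition cone (A : idomainType) (P : A -> Prop) :=
  [/\ (forall a, P a -> a != 0), (forall a b, P a -> P b -> P (a + b))
    & (forall a, a != 0 -> P (a * a))].

Lemma add_samesize (A : idomainType) (p q : {poly A}) :
  (0 < size p)%N -> size p = size q -> lead_coef p + lead_coef q != 0 ->
  size (p + q) = size p /\ lead_coef (p + q) = lead_coef p + lead_coef q.
Proof.
move=> sp0 Eq Hc.
have Hco : (p + q)`_(size p).-1 = lead_coef p + lead_coef q.
  by rewrite coefD /lead_coef Eq.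
have Hle : (size (p + q)%R <= size p)%N.
  by apply: (leq_trans (size_polyD p q)); rewrite -Eq maxnn.
have Hge : (size p <= size (p + q)%R)%N.
  case: leqP => // Hlt.
  have : (p + q)`_(size p).-1 = 0.
    apply: nth_default; by rewrite -ltnS prednK.
  by rewrite Hco => /eqP; rewrite (negbTE Hc).
have Hs : size (p + q) = size p by apply/eqP; rewrite eqn_leq Hle Hge.
by split => //; rewrite lead_coefE Hs.
Qed.

Lemma cone_poly (A : idomainType) (P : A -> Prop) : cone P ->
  cone (fun p : {poly A} => odd (size p) /\ P (lead_coef p)).
Proof.
case=> Hnz Hadd Hsq; split.
- move=> p [Ho _]; rewrite -size_poly_eq0; by case: (size p) Ho.
- move=> p q [Hop Hpp] [Hoq Hpq].
  case: (ltngtP (size p) (size q)) => Hs.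
  + by rewrite addrC size_polyDl // lead_coefDl.
  + by rewrite size_polyDl // lead_coefDl.
  + have sp0 : (0 < size p)%N by case: (size p) Hop.
    have [-> ->] := add_samesize sp0 Hs (Hnz _ (Hadd _ _ Hpp Hpq)).
    by split => //; apply: Hadd.
- move=> g Hg; split.
  + rewrite size_mul //.
    move: Hg; rewrite -size_poly_eq0; case: (size g) => // n _.
    by rewrite addSn /= addnS /= addnn odd_double.
  + by rewrite lead_coefM; apply: Hsq; rewrite lead_coef_eq0.
Qed.

Lemma sos_cone (A : idomainType) (P : A -> Prop) (cP : cone P) (s : seq A) :
  \sum_(g <- s) g ^+ 2 = 0 \/ P (\sum_(g <- s) g ^+ 2).
Proof.
case: cP => Hnz Hadd Hsq.
elim: s => [|g s IH]; first by left; rewrite big_nil.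
rewrite big_cons.
have [->|Hg] := eqVneq g 0.
  by rewrite expr0n add0r.
right; case: IH => [->|IH]; first by rewrite addr0 expr2; apply: Hsq.
by apply: Hadd => //; rewrite expr2; apply: Hsq.
Qed.

Definition cls (A : idomainType) (p : {poly {poly A}}) :=
  (odd (size p), odd (size (lead_coef p))).

Lemma add_diffsize (A : idomainType) (p q : {poly A}) : size p != size q ->
  p + q != 0 /\ (size (p + q) = size p \/ size (p + q) = size q).
Proof.
case: (ltngtP (size p) (size q)) => // Hs _.
- rewrite addrC size_polyDl //; split; last by right.
  by rewrite -size_poly_eq0 size_polyDl // -lt0n (leq_ltn_trans _ Hs).
- rewrite size_polyDl //; split; last by left.
  by rewrite -size_poly_eq0 size_polyDl // -lt0n (leq_ltn_trans _ Hs).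
Qed.

Lemma cls_add (A : idomainType) (p q : {poly {poly A}}) :
  p != 0 -> q != 0 -> cls p != cls q ->
  p + q != 0 /\ (cls (p + q) = cls p \/ cls (p + q) = cls q).
Proof.
move=> Hp Hq Hc.
case: (ltngtP (size p) (size q)) => Hs.
- rewrite /cls addrC size_polyDl // lead_coefDl //; split; last by right.
  by rewrite -size_poly_eq0 size_polyDl // size_poly_eq0.
- rewrite /cls size_polyDl // lead_coefDl //; split; last by left.
  by rewrite -size_poly_eq0 size_polyDl // size_poly_eq0.
- have Hl : size (lead_coef p) != size (lead_coef q).
    apply: contraNneq Hc => Hl; by rewrite /cls Hs Hl.
  have [Hc0 Hsz] := add_diffsize Hl.
  have sp0 : (0 < size p)%N by rewrite size_poly_gt0.
  have [Hs1 Hl1] := add_samesize sp0 Hs Hc0.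
  split; first by rewrite -size_poly_eq0 Hs1 -lt0n.
  rewrite /cls Hs1 Hl1; case: Hsz => ->; first by left.
  by right; rewrite Hs.
Qed.

Definition okc (A : idomainType) (S : pred (bool * bool)) (p : {poly {poly A}}) :=
  p = 0 \/ (p != 0 /\ S (cls p)).

Lemma okc_add (A : idomainType) (S1 S2 : pred (bool * bool)) (p q : {poly {poly A}}) :
  (forall c, S1 c -> S2 c -> False) -> okc S1 p -> okc S2 q ->
  okc (predU S1 S2) (p + q) /\ (p + q = 0 -> p = 0 /\ q = 0).
Proof.
move=> Hd [->|[Hp H1]] [->|[Hq H2]].
- by rewrite addr0; split; [left|].
- rewrite add0r; split; last by move=> E; rewrite E eqxx in Hq.
  by right; split => //; apply/orP; right.
- rewrite addr0; split; last by move=> E; rewrite E eqxx in Hp.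
  by right; split => //; apply/orP; left.
- have Hne : cls p != cls q.
    by apply/eqP => E; apply: (Hd (cls p)) => //; rewrite E.
  have [Hs Hcl] := cls_add Hp Hq Hne.
  split; last by move=> E; rewrite E eqxx in Hs.
  right; split => //; apply/orP; case: Hcl => ->; by [left|right].
Qed.

Lemma common_den (T : idomainType) (s : seq {fraction T}) :
  exists D : T, D != 0 /\
    forall g, g \in s -> exists p, g * FracField.tofrac D = FracField.tofrac p.
Proof.
elim: s => [|g s [D [HD IH]]].
  by exists 1; split; [exact: oner_neq0 | move=> g; rewrite in_nil].
have [a [b [Hb ->]]] := frac_repr g.
exists (D * b); split; first by rewrite mulf_neq0.
move=> h; rewrite in_cons => /predU1P [->|Hh].
  exists (a * D); rewrite !tofracM mulrA mulrAC -[_ / _ * _]mulrA.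
  by rewrite mulVf ?mulr1 // tofrac_eq0.
have [p Hp] := IH h Hh.
by exists (p * b); rewrite tofracM mulrA Hp tofracM.
Qed.

Lemma sos_lift (T : idomainType) (D : T) (s : seq {fraction T}) :
  (forall g, g \in s -> exists p, g * FracField.tofrac D = FracField.tofrac p) ->
  exists P : T, is_sos P /\
    (\sum_(g <- s) g ^+ 2) * FracField.tofrac (D * D) = FracField.tofrac P.
Proof.
elim: s => [|g s IH] H.
  exists 0; split; first by exists [::]; rewrite big_nil.
  by rewrite big_nil mul0r tofrac0.
have [p Hp] := H g (mem_head _ _).
have [P [[l Hl] HP]] : exists P : T, is_sos P /\
    (\sum_(g <- s) g ^+ 2) * FracField.tofrac (D * D) = FracField.tofrac P.
  by apply: IH => h Hh; apply: H; rewrite in_cons Hh orbT.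
exists (p ^+ 2 + P); split; first by exists (p :: l); rewrite big_cons Hl.
rewrite big_cons mulrDl HP tofracD tofracXn -Hp tofracM.
by rewrite exprMn expr2 [FracField.tofrac D ^+ 2]expr2.
Qed.

End Helpers.

Lemma poly_main (R : rcfType) (P0 P1 P2 P3 : {poly {poly R}}) :
  is_sos P0 -> is_sos P1 -> is_sos P2 -> is_sos P3 ->
  P0 * ('X * ('X : {poly R})%:P) = P1 + P2 * 'X + P3 * ('X : {poly R})%:P ->
  [/\ P0 = 0, P1 = 0, P2 = 0 & P3 = 0].
Proof.
have c0 : cone (fun a : R => 0 < a).
  split.
  - by move=> a /gt_eqF ->.
  - by move=> a b; apply: addr_gt0.
  - by move=> a Ha; rewrite -expr2 lt0r sqrf_eq0 Ha sqr_ge0.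
have c2 := cone_poly (cone_poly c0).
set Y := ('X : {poly R})%:P.
have HY : Y != 0 by rewrite polyC_eq0 polyX_eq0.
have HX : ('X : {poly {poly R}}) != 0 by rewrite polyX_eq0.
have clsP : forall P : {poly {poly R}}, is_sos P ->
    P = 0 \/ (P != 0 /\ cls P = (true, true)).
  move=> P [l ->]; case: (sos_cone c2 l) => [->|]; first by left.
  move=> H; right; split; first by case: c2 => Hnz _ _; exact: Hnz.
  by case: H => H1 [H2 _]; rewrite /cls H1 H2.
have clsX : forall P : {poly {poly R}}, P != 0 ->
    cls (P * 'X) = (~~ (cls P).1, (cls P).2).
  by move=> P HP; rewrite /cls size_mulX // lead_coefMX.
have clsY : forall P : {poly {poly R}}, P != 0 ->
    cls (P * Y) = ((cls P).1, ~~ (cls P).2).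
  move=> P HP; rewrite /cls mulrC mul_polyC size_scale ?polyX_eq0 //.
  rewrite lead_coefZ size_mul ?polyX_eq0 ?lead_coef_eq0 // size_polyX /=.
  by rewrite add0n.
move=> H0 H1 H2 H3 E.
have ok1 : okc (fun c => c == (true, true)) P1.
  by case: (clsP _ H1) => [|[? Hc]]; [left | right; split => //; rewrite /= Hc].
have ok2 : okc (fun c => c == (false, true)) (P2 * 'X).
  case: (clsP _ H2) => [->|[Hn Hc]]; first by left; rewrite mul0r.
  by right; split; [rewrite mulf_neq0 | rewrite /= clsX // Hc].
have ok3 : okc (fun c => c == (true, false)) (P3 * Y).
  case: (clsP _ H3) => [->|[Hn Hc]]; first by left; rewrite mul0r.
  by right; split; [rewrite mulf_neq0 | rewrite /= clsY // Hc].
have d12 : forall c : bool * bool, (fun c => c == (true, true)) c ->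
    (fun c => c == (false, true)) c -> False by move=> c /= /eqP ->.
have [ok12 z12] := okc_add d12 ok1 ok2.
have d3 : forall c : bool * bool,
    predU (fun c => c == (true, true)) (fun c => c == (false, true)) c ->
    (fun c => c == (true, false)) c -> False by move=> c /orP [] /eqP ->.
have [ok123 z123] := okc_add d3 ok12 ok3.
have Z : P1 + P2 * 'X + P3 * Y = 0.
  case: ok123 => // [[Hn Hc]].
  exfalso; move: Hc; rewrite -E.
  case: (clsP _ H0) => [Z0|[Hn0 Hc0]].
    by move: Hn; rewrite -E Z0 mul0r eqxx.
  by rewrite mulrA clsY ?mulf_neq0 // clsX // Hc0.
have [/z12 [Z1 Z2] Z3] := z123 Z.
have Z0 : P0 = 0 by apply/eqP; move/eqP: E; rewrite Z !mulf_eq0 (negbTE HX) (negbTE HY) !orbF.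
split => //.
  by move/eqP: Z2; rewrite mulf_eq0 (negbTE HX) orbF => /eqP.
by move/eqP: Z3; rewrite mulf_eq0 (negbTE HY) orbF => /eqP.
Qed.

Theorem mainTheorem5 (R : rcfType) (s0 s1 s2 s3 : ratfun2 R) :
  is_sos s0 -> is_sos s1 -> is_sos s2 -> is_sos s3 ->
  s0 * (varX R * varY R) = s1 + s2 * varX R + s3 * varY R ->
  [/\ s0 = 0, s1 = 0, s2 = 0 & s3 = 0].
Proof.
move=> [l0 Hl0] [l1 Hl1] [l2 Hl2] [l3 Hl3] E.
have [D [HD HDs]] := common_den (l0 ++ l1 ++ l2 ++ l3).
have [P0 [S0 E0]] := @sos_lift _ D l0 (fun g h => HDs g ltac:(by rewrite !mem_cat h)).
have [P1 [S1 E1]] := @sos_lift _ D l1 (fun g h => HDs g ltac:(by rewrite !mem_cat h !orbT)).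
have [P2 [S2 E2]] := @sos_lift _ D l2 (fun g h => HDs g ltac:(by rewrite !mem_cat h !orbT)).
have [P3 [S3 E3]] := @sos_lift _ D l3 (fun g h => HDs g ltac:(by rewrite !mem_cat h !orbT)).
rewrite -Hl0 in E0; rewrite -Hl1 in E1; rewrite -Hl2 in E2; rewrite -Hl3 in E3.
have EP : FracField.tofrac (P0 * ('X * ('X : {poly R})%:P)) =
          FracField.tofrac (P1 + P2 * 'X + P3 * ('X : {poly R})%:P).
  rewrite !tofracD !tofracM -E0 -E1 -E2 -E3.
  move: E; rewrite /varX /varY => E.
  rewrite mulrAC E !mulrDl; congr (_ + _ + _); by rewrite mulrAC.
move/eqP: EP; rewrite tofrac_eq => /eqP EP.
have [Z0 Z1 Z2 Z3] := poly_main S0 S1 S2 S3 EP.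
have HD2 : FracField.tofrac (D * D) != 0 by rewrite tofrac_eq0 mulf_neq0.
have fin : forall s : ratfun2 R, s * FracField.tofrac (D * D) = 0 -> s = 0.
  by move=> s /eqP; rewrite mulf_eq0 (negbTE HD2) orbF => /eqP.
by split; apply: fin; [rewrite E0 Z0 | rewrite E1 Z1 | rewrite E2 Z2 | rewrite E3 Z3]; rewrite tofrac0.
Qed.
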